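(* For all $X_1,X_3\in\{I,S,H\}$, the hybrid evaluators $X_1SX_3\mathbin{\Diamond}ISI$ and $X_1SX_3\mathbin{\Diamond}ISS$ are not one-step equivalent: there is a term (e.g. $((\lambda x.B)(x\,R))\,N$ with $R$ a redex) on which their evaluation sequences differ. In particular $HSS\mathbin{\Diamond}ISI$ and $HSS\mathbin{\Diamond}ISS$ (ahead machine), and $HSH\mathbin{\Diamond}ISI$ and $HSH\mathbin{\Diamond}ISS$ (strict normalisation), are not one-step equivalent.
   Context: Terms: $\Lambda ::= x\mid\lambda x.\Lambda\mid\Lambda\Lambda$; $[N/x]B$ is capture-avoiding substitution; a redex is a term $(\lambda x.B)N$. An evaluator is a partial function $\Lambda\rightharpoonup\Lambda$ defined by inference rules; $\mathrm{id}$ is the identity. Eval-apply template: given evaluators $la,op_1,ar_1,op_2,ar_2$ (possibly $ea$ itself), $ea$ is defined by (var) $ea(x)=x$; (abs) $ea(\lambda x.B)=\lambda x.B'$ if $la(B)=B'$; (con) $ea(MN)=B'$ if $op_1(M)=\lambda x.B$, $ar_1(N)=N'$, $ea([N'/x]B)=B'$; (neu) $ea(MN)=M''N'$ if $op_1(M)=M'$, $M'$ not an abstraction, $op_2(M')=M''$, $ar_2(N)=N'$. Premises are evaluated left to right; the evaluation sequence is the sequence of reduction steps of the whole term given by the (con) contractions (including those inside subsidiary calls) in in-order traversal of the derivation. Two evaluators are one-step equivalent iff they produce the same evaluation sequence on every term. Uniform evaluator $XYZ\in\{I,S\}^3$: $op_1=ea$, $op_2=\mathrm{id}$, and $la$,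 $ar_1$, $ar_2$ equal to $ea$ itself when the letter is $S$ and $\mathrm{id}$ when it is $I$. Hybrid evaluator $X_1X_2X_3\mathbin{\Diamond}Y_1Y_2Y_3$ ($X_i\in\{I,S,H\}$): with subsidiary $su$ the uniform evaluator $Y_1Y_2Y_3$, it is the instance $hy$ of the template with $op_1=su$, $op_2=hy$, and $la$, $ar_1$, $ar_2$ equal to $\mathrm{id}$, $su$, or $hy$ according as $X_1$, $X_2$, $X_3$ is $I$, $S$, or $H$. *)

(* Defs.v *)
From Stdlib Require Import Arith List.
Import ListNotations.

Inductive term : Type :=
| Var : nat -> term
| Lam : term -> term
| App : term -> term -> term.

Fixpoint lift (d c : nat) (t : term) : term :=
  match t with
  | Var n => if Nat.ltb n c then Var n else Var (n + d)
  | Lam b => Lam (lift d (S c) b)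
  | App a b => App (lift d c a) (lift d c b)
  end.

(* capture-avoiding substitution of s for variable k in t
   (variables above k are decremented: the binder is consumed) *)
Fixpoint subst (s : term) (k : nat) (t : term) : term :=
  match t with
  | Var n => if Nat.ltb n k then Var n
             else if Nat.eqb n k then lift k 0 s else Var (n - 1)
  | Lam b => Lam (subst s (S k) b)
  | App a b => App (subst s k a) (subst s k b)
  end.

Definition subst0 (N B : term) : term := subst N 0 B.

Definition is_abs (t : term) : bool :=
  match t with Lam _ => true | _ => false end.

Inductive IS := I_ | S_.
Inductive ISH := Ih | Sh | Hh.

Inductive tname : Type :=
| Uni (y1 y2 y3 : IS)
| Hyb (x1 x2 x3 : ISH) (y1 y2 y3 : IS).

Inductive ename : Type :=
| EId
| ET (e : tname).

Definition of_IS (y : IS) (self : ename) : ename :=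
  match y with I_ => EId | S_ => self end.

Definition of_ISH (x : ISH) (su self : ename) : ename :=
  match x with Ih => EId | Sh => su | Hh => self end.

Definition la (e : tname) : ename :=
  match e with
  | Uni y1 _ _ => of_IS y1 (ET e)
  | Hyb x1 _ _ y1 y2 y3 => of_ISH x1 (ET (Uni y1 y2 y3)) (ET e)
  end.
Definition op1 (e : tname) : ename :=
  match e with
  | Uni _ _ _ => ET e
  | Hyb _ _ _ y1 y2 y3 => ET (Uni y1 y2 y3)
  end.
Definition ar1 (e : tname) : ename :=
  match e with
  | Uni _ y2 _ => of_IS y2 (ET e)
  | Hyb _ x2 _ y1 y2 y3 => of_ISH x2 (ET (Uni y1 y2 y3)) (ET e)
  end.
Definition op2 (e : tname) : ename :=
  match e with
  | Uni _ _ _ => EId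
  | Hyb _ _ _ _ _ _ => ET e
  end.
Definition ar2 (e : tname) : ename :=
  match e with
  | Uni _ _ y3 => of_IS y3 (ET e)
  | Hyb _ _ x3 y1 y2 y3 => of_ISH x3 (ET (Uni y1 y2 y3)) (ET e)
  end.

(* A reduction step of the whole term: (before, after). *)
Definition step := (term * term)%type.

(* [eval e C t v tr]: evaluator e maps t to v, where t sits in the
   whole-term context C (a one-hole context, as a plugging function),
   and tr is the sequence of whole-term reduction steps performed by the
   (con) contractions of the derivation, in in-order (left-to-right)
   traversal. *)
Inductive eval : ename -> (term -> term) -> term -> term -> list step -> Prop :=
| ev_id : forall C t, eval EId C t t []
| ev_var : forall e C n, eval (ET e) C (Var n) (Var n) []
| ev_abs : forall e C B B' tr,
    eval (la e) (fun u => C (Lam u)) B B' tr ->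
    eval (ET e) C (Lam B) (Lam B') tr
| ev_con : forall e C M N B N' B' tr1 tr2 tr3,
    eval (op1 e) (fun u => C (App u N)) M (Lam B) tr1 ->
    eval (ar1 e) (fun u => C (App (Lam B) u)) N N' tr2 ->
    eval (ET e) C (subst0 N' B) B' tr3 ->
    eval (ET e) C (App M N) B'
         (tr1 ++ tr2 ++ (C (App (Lam B) N'), C (subst0 N' B)) :: tr3)
| ev_neu : forall e C M N M' M'' N' tr1 tr2 tr3,
    eval (op1 e) (fun u => C (App u N)) M M' tr1 ->
    is_abs M' = false ->
    eval (op2 e) (fun u => C (App u N)) M' M'' tr2 ->
    eval (ar2 e) (fun u => C (App M'' u)) N N' tr3 ->
    eval (ET e) C (App M N) (App M'' N') (tr1 ++ tr2 ++ tr3).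

Definition evaluates (e : tname) (t v : term) (tr : list step) : Prop :=
  eval (ET e) (fun u => u) t v tr.

(* Main.v *)
Require Import Defs.
From Stdlib Require Import List.
Import ListNotations.

Ltac go := cbn;
  first [ apply ev_id
        | apply ev_var
        | eapply ev_abs; go
        | eapply ev_con; [go|go|go]
        | eapply ev_neu; [go| reflexivity | go | go] ].

Definition Rt := App (Lam (Var 0)) (Lam (Var 0)).
Definition tt0 := App (App (Lam (Var 0)) (App (Var 5) Rt)) (Var 6).

Theorem mainTheorem8 :
  forall x1 x3 : ISH,
    exists (t v1 v2 : term) (tr1 tr2 : list step),
      evaluates (Hyb x1 Sh x3 I_ S_ I_) t v1 tr1 /\
      evaluates (Hyb x1 Sh x3 I_ S_ S_) t v2 tr2 /\
      tr1 <> tr2.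
Proof.
  intros x1 x3; exists tt0.
  destruct x1, x3; do 4 eexists; unfold evaluates, tt0, Rt;
  (split; [go|split; [go| cbn; discriminate]]).
Qed.
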